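(* Let $p \geq 3$ be a prime and $x, y \in \mathbb{Z}$ with $x^2 - 2 = y^p$ and $y \neq -1$. Then $x$ and $y$ are both odd, $y \equiv 7 \pmod 8$, and every prime dividing $y$ is $\equiv \pm 1 \pmod 8$. *)

(* Defs.v *)
From Stdlib Require Export ZArith Znumtheory.

(* Main.v *)
Require Import Defs.
From Stdlib Require Import ZArith Znumtheory Lia.
From mathcomp Require all_boot all_algebra all_field zify.
Module FpPart.
Import all_boot all_algebra all_field zify.
Import GRing.Theory.
Local Open Scope ring_scope.

Lemma EO t : ((2*t)`! = (\prod_(0 <= k < t) (2*k + 2)) * \prod_(0 <= k < t) (2*k+1) /\
  (2*t).+1`! = (\prod_(0 <= k < t) (2*k + 2)) * \prod_(0 <= k < t.+1) (2*k+1))%N.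
Proof.
elim: t => [|t [IH1 IH2]]; first by rewrite big_nat1 !big_geq.
have E1 : ((2 * t.+1)`! = (2*t+2) * (2*t).+1`!)%N.
  by rewrite (_ : 2 * t.+1 = (2*t).+2)%N ?factS; lia.
rewrite E1 IH2 [in X in _ /\ X]factS E1 IH2.
rewrite !big_nat_recr //=; split; lia.
Qed.

Lemma pow2fact m : (2^m * m`! = \prod_(0 <= k < m) (2*k+2))%N.
Proof.
elim: m => [|m IH]; first by rewrite big_geq.
rewrite big_nat_recr //= -IH factS expnS; lia.
Qed.

Lemma notdvd_fact p m : prime p -> (m < p)%N -> ~~ (p %| m`!)%N.
Proof.
move=> pp; elim: m => [|m IH] Hm; first by rewrite fact0 dvdn1; apply/negP => /eqP E; rewrite E in pp.
rewrite factS Euclid_dvdM // negb_or IH ?andbT; last lia.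
apply/negP => /dvdn_leq; lia.
Qed.

Lemma two_neq0 p : prime p -> odd p -> (2%:R : 'F_p) != 0.
Proof.
move=> pp op; rewrite -(dvdn_pcharf (pchar_Fp pp)); apply/negP => /dvdn_leq H.
have := prime_gt1 pp; have : p != 2%N by apply/eqP => E; rewrite E in op.
move: H => /(_ isT); lia.
Qed.

Lemma gauss2 p : prime p -> odd p -> (exists a : 'F_p, a ^+ 2 = 2%:R) ->
  (p %% 8 = 1 \/ p %% 8 = 7)%N.
Proof.
move=> pp op [a Ha].
have h2 := @two_neq0 p pp op.
set m := p./2.
have Hp : p = (2 * m + 1)%N by have := odd_double_half p; rewrite op -muln2; lia.
have a0 : a != 0 by apply/eqP => E; move: Ha; rewrite E expr0n /= => E2; rewrite -E2 eqxx in h2.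
have Hf : (2%:R : 'F_p) ^+ m = 1.
  have := expf_card a; rewrite card_Fp // => E.
  have {E} : a ^+ (2 * m + 1)%N = a by rewrite -Hp.
  rewrite -Ha -exprM addn1 exprS.
  by move=> E; apply: (mulIf a0); rewrite mul1r -[in RHS]E mulrC.
set t := m./2.
have Hm : (m = t + t + odd m)%N by have := odd_double_half m; rewrite -muln2; lia.
have Hodd : (odd m <= 1)%N by case: (odd m).
have HG : (2%:R : 'F_p) ^+ m * (m`!)%:R = (-1) ^+ (m - t) * (m`!)%:R.
  rewrite -natrX -natrM pow2fact natr_prod (big_cat_nat (n := t)) //=; last lia.
  have E1 : \prod_(t <= i < m) ((2 * i + 2)%N%:R : 'F_p) =
            \prod_(t <= i < m) ((-1) * ((p - (2 * i + 2))%N%:R)).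
    apply: eq_big_nat => i /andP[_ Hi].
    rewrite natrB; last lia.
    by rewrite pchar_Fp_0 // sub0r mulN1r opprK.
  rewrite E1 big_split /= prodr_const_nat.
  rewrite (big_addn 0 m t).
  have E2 : \prod_(0 <= i < m - t) ((p - (2 * (i + t) + 2))%N%:R : 'F_p) =
            \prod_(0 <= i < m - t) ((2 * i + 1)%N%:R).
    rewrite big_nat_rev /=; apply: eq_big_nat => i /andP[_ Hi]; congr (_%:R); lia.
  rewrite E2 -!natr_prod mulrCA -natrM.
  have [_ F2] := EO t; have [F1 _] := EO t.
  congr (_ * _%:R).
  have -> : (m - t = t + odd m)%N by lia.
  case: (odd m) Hm => /= Hm.
    by rewrite [in RHS](_ : m = (2*t).+1)%N ?F2 ?addn1 //; lia.
  by rewrite [in RHS](_ : m = (2*t))%N ?F1 ?addn0 //; lia.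
have Hfact : ((m`!)%:R : 'F_p) != 0.
  rewrite -(dvdn_pcharf (pchar_Fp pp)); apply: notdvd_fact => //; lia.
move: HG; rewrite Hf => /(mulIf Hfact) HS.
have Hev : odd (m - t) = false.
  apply/negP => Ho; move: HS; rewrite -signr_odd Ho expr1 => E.
  move: h2; rewrite -[2%:R]/(1 + 1 : 'F_p) {1}E addNr eqxx //.
have := odd_double_half (m - t); rewrite Hev -muln2 add0n => Ht.
move: Hm Hodd; case: (odd m) => /= Hm _; lia.
Qed.

Local Open Scope Z_scope.
Lemma bridge (q x : Z) : Znumtheory.prime q -> Z.Odd q -> (q | x^2 - 2) ->
  (q mod 8 = 1 \/ q mod 8 = 7).
Proof.
move=> Hq [k Hk] [c Hc].
have q2 := Znumtheory.prime_ge_2 q Hq.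
set n := Z.to_nat q.
have Hn : Z.of_nat n = q by rewrite /n; lia.
have pn : prime n.
  apply/primeP; split; first lia.
  move=> d /dvdnP [j Hj].
  have Hd : (Z.of_nat d | q).
    by exists (Z.of_nat j); rewrite -Hn Hj; lia.
  have := Znumtheory.prime_divisors q Hq _ Hd.
  move=> H; case: H => [H|[H|[H|H]]]; lia.
have on : odd n.
  have : (n %% 2 = 1)%N by lia.
  by rewrite modn2; case: (odd n).
have hx := Z.mod_pos_bound x q ltac:(lia).
set r0 := (x mod q) in hx.
have Hr : exists c' : Z, (r0 * r0 - 2 = q * c').
  exists (c - 2 * x * (x / q) + q * (x / q) * (x / q)).
  have := Z.div_mod x q ltac:(lia); rewrite -/r0 => E.
  have E2 : (x ^ 2 = x * x) by ring.
  rewrite E2 in Hc; nia.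
case: Hr => c' Hc'.
have c'0 : (0 <= c') by nia.
have Hnat : (Z.to_nat r0 * Z.to_nat r0 = 2 + n * Z.to_nat c')%N.
  have HR : Z.of_nat (Z.to_nat r0) = r0 by lia.
  have HC : Z.of_nat (Z.to_nat c') = c' by lia.
  have E : Z.of_nat (Z.to_nat r0) * Z.of_nat (Z.to_nat r0) = 2 + Z.of_nat n * Z.of_nat (Z.to_nat c').
    by rewrite HR HC Hn; lia.
  apply: Nat2Z.inj; zify; nia.
have Ha : exists a : 'F_n, a ^+ 2 = 2%:R.
  exists ((Z.to_nat r0)%:R).
  by rewrite -natrX -mulnn Hnat natrD natrM pchar_Fp_0 // mul0r addr0.
have [H8|H8] := @gauss2 n pn on Ha.
  by left; clearbody n; clear -H8 Hn q2; zify; Z.div_mod_to_equations; lia.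
by right; clearbody n; clear -H8 Hn q2; zify; Z.div_mod_to_equations; lia.
Qed.
End FpPart.

From Stdlib Require Import ZArith Znumtheory.
Open Scope Z_scope.
Set Bullet Behavior "Strict Subproofs".
Ltac zlia := Z.div_mod_to_equations; lia.

Lemma sq_mod8 (x : Z) : (x^2 - 2) mod 8 = 2 \/ (x^2 - 2) mod 8 = 6 \/
   ((x^2 - 2) mod 8 = 7 /\ Z.Odd x).
Proof.
  rewrite Z.pow_2_r.
  assert (E : x = 8 * (x / 8) + x mod 8) by (apply Z.div_mod; lia).
  assert (R : 0 <= x mod 8 < 8) by (apply Z.mod_pos_bound; lia).
  set (a := x / 8) in *. set (b := x mod 8) in *. clearbody a b.
  assert (E2 : x * x - 2 = (b * b - 2) + (8 * a * a + 2 * a * b) * 8) by (subst x; ring).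
  rewrite E2, Z_mod_plus_full by lia.
  assert (Hb : b = 0 \/ b = 1 \/ b = 2 \/ b = 3 \/ b = 4 \/ b = 5 \/ b = 6 \/ b = 7) by lia.
  destruct Hb as [-> | [-> | [-> | [-> | [-> | [-> | [-> | ->]]]]]]]; simpl;
    try (left; reflexivity); try (right; left; reflexivity);
    right; right; split; try reflexivity; exists (x / 2); zlia.
Qed.

Lemma sq_odd_mod8 (y : Z) : Z.Odd y -> (y * y) mod 8 = 1.
Proof.
  intros [k Hk]. subst y.
  assert (E : k = 4 * (k / 4) + k mod 4) by (apply Z.div_mod; lia).
  assert (R : 0 <= k mod 4 < 4) by (apply Z.mod_pos_bound; lia).
  set (a := k / 4) in *. set (b := k mod 4) in *. clearbody a b. subst k.
  assert (E2 : (2 * (4 * a + b) + 1) * (2 * (4 * a + b) + 1) =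
     (2 * b + 1) * (2 * b + 1) + (8 * a * a + 4 * a * b + 2 * a) * 8) by ring.
  rewrite E2, Z_mod_plus_full.
  assert (Hb : b = 0 \/ b = 1 \/ b = 2 \/ b = 3) by lia.
  destruct Hb as [-> | [-> | [-> | ->]]]; reflexivity.
Qed.

Lemma pow_odd_mod8 (y r : Z) : Z.Odd y -> 0 <= r -> (y * (y ^ 2) ^ r) mod 8 = y mod 8.
Proof.
  intros Hy Hr. rewrite Z.mul_mod by lia.
  assert (H : (y ^ 2) ^ r mod 8 = 1).
  { pattern r. apply natlike_ind; [reflexivity| |exact Hr].
    intros s Hs IH. rewrite Z.pow_succ_r by lia.
    rewrite Z.mul_mod, IH, Z.pow_2_r, sq_odd_mod8 by (auto; lia). reflexivity. }
  rewrite H, Z.mul_1_r. apply Z.mod_mod. lia.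
Qed.

Theorem theorem2p2 (p : Z) (x y : Z) :
  prime p -> 3 <= p ->
  x ^ 2 - 2 = y ^ p -> y <> -1 ->
  Z.Odd x /\ Z.Odd y /\ y mod 8 = 7 /\
  (forall q : Z, prime q -> (q | y) -> q mod 8 = 1 \/ q mod 8 = 7).
Proof.
  intros Hp Hp3 H Hy.
  assert (Hpo : Z.Odd p).
  { destruct (Z.Even_or_Odd p) as [[k Hk]|Ho]; [|exact Ho].
    assert (D : (2 | p)) by (exists k; lia).
    destruct (prime_divisors p Hp 2 D) as [?|[?|[?|?]]]; lia. }
  destruct Hpo as [r Hr].
  assert (Hyp : y ^ p = y * (y ^ 2) ^ r).
  { rewrite Hr, <- Z.pow_mul_r, Z.add_1_r, Z.pow_succ_r by lia. reflexivity. }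
  destruct (Z.Even_or_Odd y) as [[z Hz]|Hyo].
  - exfalso.
    assert (E : y ^ p = (z * z * z * (y ^ 2) ^ (r - 1)) * 8).
    { rewrite Hyp. replace r with (Z.succ (r - 1)) at 1 by lia.
      rewrite Z.pow_succ_r by lia. subst y. ring. }
    assert (M : (x ^ 2 - 2) mod 8 = 0) by (rewrite H, E; apply Z_mod_mult).
    destruct (sq_mod8 x) as [?|[?|[? _]]]; lia.
  - assert (M : y mod 8 = (x ^ 2 - 2) mod 8).
    { rewrite H, Hyp, pow_odd_mod8 by (auto; lia). reflexivity. }
    destruct (sq_mod8 x) as [M2|[M2|[M2 Hxo]]].
    + exfalso. destruct Hyo as [k Hk]. zlia.
    + exfalso. destruct Hyo as [k Hk]. zlia.
    + split; [exact Hxo|]. split; [exact Hyo|]. split; [lia|].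
      intros q Hq Hqy.
      apply (FpPart.bridge q x Hq).
      * destruct (Z.Even_or_Odd q) as [[k Hk]|Ho]; [|exact Ho].
        exfalso.
        assert (D : (2 | y)) by (apply Z.divide_trans with q; [exists k; lia | exact Hqy]).
        destruct D as [c Hc]. destruct Hyo as [k' Hk']. lia.
      * rewrite H, Hyp. apply Z.divide_mul_l. exact Hqy.
Qed.
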